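(* (1) $\mathrm{alpha}$ is an equivalence relation on the set of good quasiterms, and $\mathrm{alphaAbs}$ is an equivalence relation on the set of good quasiabstractions. (2) On good quasiterms and quasiabstractions, the predicates obtained by replacing the abstraction clause in the definition of $\mathrm{alpha}/\mathrm{alphaAbs}$ by $\mathrm{alphaAbs}(\mathrm{qAbs}\;xs\;x\;X)(\mathrm{qAbs}\;xs'\;x'\;X')\iff xs=xs'\wedge\big(\forall y\notin\{x,x'\}.\ \mathrm{qFresh}\;xs\;y\;X\wedge\mathrm{qFresh}\;xs\;y\;X'\Longrightarrow\mathrm{alpha}(X[y\wedge x]_{xs})(X'[y\wedge x']_{xs})\big)$ coincide with $\mathrm{alpha}$ and $\mathrm{alphaAbs}$.
   Context: Fix types $\mathrm{var}$, $\mathrm{varsort}$, $\mathrm{index}$, $\mathrm{bindex}$, $\mathrm{opsym}$. $(\alpha,\beta)\,\mathrm{input}$ is the type of partial functions $\alpha\to\beta\;\mathrm{option}$; $\mathrm{dom}\,f=\{i\mid f\,i\neq\mathrm{None}\}$. For a predicate $P$, $\uparrow P\;inp$ holds iff $P$ holds of all defined values; for a binary relation $P$, $\uparrow P\;inp\;inp'$ holds iff for every $i$ either $inp\;i=inp'\;i=\mathrm{None}$, or $inp\;i=\mathrm{Some}\;b$, $inp'\;i=\mathrm{Some}\;b'$ and $P\;b\;b'$. Quasiterms/quasiabstractions: mutually recursive free datatypes $\mathrm{qterm}=\mathrm{qVar}\;\mathrm{varsort}\;\mathrm{var}\mid\mathrm{qOp}\;\mathrm{opsym}\;((\mathrm{index},\mathrm{qterm})\mathrm{input})\;((\mathrm{bindex},\mathrm{qabs})\mathrm{input})$,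 $\mathrm{qabs}=\mathrm{qAbs}\;\mathrm{varsort}\;\mathrm{var}\;\mathrm{qterm}$ ($x$ bound in $X$ in $\mathrm{qAbs}\;xs\;x\;X$). $\mathrm{qFresh}\;xs\;x\;X$: the variable $x$ of varsort $xs$ does not occur free in $X$. Swapping $X[y\wedge x]_{xs}$: replace every occurrence (free, bound, or binding) of the variable $y$ of varsort $xs$ by $x$ and vice versa. Alpha-equivalence is defined mutually recursively: $\mathrm{alpha}(\mathrm{qVar}\;xs\;x)(\mathrm{qVar}\;xs'\;x')\iff xs=xs'\wedge x=x'$; $\mathrm{alpha}(\mathrm{qOp}\;\delta\;inp\;binp)(\mathrm{qOp}\;\delta'\;inp'\;binp')\iff\delta=\delta'\wedge\uparrow\mathrm{alpha}\;inp\;inp'\wedge\uparrow\mathrm{alphaAbs}\;binp\;binp'$; $\mathrm{alpha}$ is false between a $\mathrm{qVar}$ and a $\mathrm{qOp}$ quasiterm; $\mathrm{alphaAbs}(\mathrm{qAbs}\;xs\;x\;X)(\mathrm{qAbs}\;xs'\;x'\;X')\iff xs=xs'\wedge\exists y\notin\{x,x'\}.\ \mathrm{qFresh}\;xs\;y\;X\wedge\mathrm{qFresh}\;xs\;y\;X'\wedge\mathrm{alpha}(X[y\wedge x]_{xs})(X'[y\wedge x']_{xs})$. Goodness: $\mathrm{qGood}(\mathrm{qVar}\;xs\;x)$; $\mathrm{qGood}(\mathrm{qOp}\;\delta\;inp\;binp)\iff\uparrow\mathrm{qGood}\;inp\wedge\uparrow\mathrm{qGoodAbs}\;binp\wedge|\mathrm{dom}\;inp|<|\mathrm{var}|\wedge|\mathrm{dom}\;binp|<|\mathrm{var}|$;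 $\mathrm{qGoodAbs}(\mathrm{qAbs}\;xs\;x\;X)\iff\mathrm{qGood}\;X$. Standing assumption: $|\mathrm{var}|$ is an infinite regular cardinal. *)

(* Defs.v *)
From Stdlib Require Import Classical ClassicalEpsilon.
Set Implicit Arguments.

Definition card_le (A B : Type) : Prop := exists f : A -> B, forall a a', f a = f a' -> a = a'.
Definition card_lt (A B : Type) : Prop := card_le A B /\ ~ card_le B A.

Definition infinite_type (T : Type) : Prop := card_le nat T.

Definition regular_type (T : Type) : Prop :=
  forall (I : Type) (F : I -> T -> Prop),
    card_lt I T ->
    (forall i, card_lt {x : T | F i x} T) ->
    card_lt {x : T | exists i, F i x} T.

Definition input (A B : Type) := A -> option B.
Definition dom (A B : Type) (f : input A B) : Type := {i : A | f i <> None}.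

Section Quasiterms.
Variables (var varsort index bindex opsym : Type).

Inductive qterm : Type :=
| qVar : varsort -> var -> qterm
| qOp : opsym -> (index -> option qterm) -> (bindex -> option qabs) -> qterm
with qabs : Type :=
| qAbs : varsort -> var -> qterm -> qabs.

Definition sw (x y z : var) : var :=
  if excluded_middle_informative (z = x) then y
  else if excluded_middle_informative (z = y) then x else z.

Definition swS (xs zs : varsort) (x y z : var) : var :=
  if excluded_middle_informative (zs = xs) then sw x y z else z.

(* qSwap xs y x X  is  X[y /\ x]_xs *)
Fixpoint qSwap (xs : varsort) (y x : var) (X : qterm) {struct X} : qterm :=
  match X with
  | qVar zs z => qVar zs (swS xs zs y x z)
  | qOp d inp binp =>
      qOp d (fun i => match inp i with Some Z => Some (qSwap xs y x Z) | None => None end)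
            (fun i => match binp i with Some A => Some (qSwapAbs xs y x A) | None => None end)
  end
with qSwapAbs (xs : varsort) (y x : var) (A : qabs) {struct A} : qabs :=
  match A with
  | qAbs zs z Z => qAbs zs (swS xs zs y x z) (qSwap xs y x Z)
  end.

Fixpoint qFresh (xs : varsort) (x : var) (X : qterm) {struct X} : Prop :=
  match X with
  | qVar ys y => ~ (ys = xs /\ y = x)
  | qOp _ inp binp =>
      (forall i, match inp i with Some Z => qFresh xs x Z | None => True end) /\
      (forall i, match binp i with Some A => qFreshAbs xs x A | None => True end)
  end
with qFreshAbs (xs : varsort) (x : var) (A : qabs) {struct A} : Prop :=
  match A with
  | qAbs ys y Z => (ys = xs /\ y = x) \/ qFresh xs x Z
  end.

Fixpoint qGood (X : qterm) : Prop :=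
  match X with
  | qVar _ _ => True
  | qOp _ inp binp =>
      (forall i, match inp i with Some Z => qGood Z | None => True end) /\
      (forall i, match binp i with Some A => qGoodAbs A | None => True end) /\
      card_lt (dom inp) var /\ card_lt (dom binp) var
  end
with qGoodAbs (A : qabs) : Prop :=
  match A with
  | qAbs _ _ Z => qGood Z
  end.

Inductive alpha : qterm -> qterm -> Prop :=
| alpha_Var : forall xs x, alpha (qVar xs x) (qVar xs x)
| alpha_Op : forall d inp inp' binp binp',
    (forall i, (inp i = None /\ inp' i = None) \/
               (exists Z Z', inp i = Some Z /\ inp' i = Some Z' /\ alpha Z Z')) ->
    (forall i, (binp i = None /\ binp' i = None) \/
               (exists A A', binp i = Some A /\ binp' i = Some A' /\ alphaAbs A A')) ->
    alpha (qOp d inp binp) (qOp d inp' binp')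
with alphaAbs : qabs -> qabs -> Prop :=
| alphaAbs_Abs : forall xs x X x' X' y,
    y <> x -> y <> x' -> qFresh xs y X -> qFresh xs y X' ->
    alpha (qSwap xs y x X) (qSwap xs y x' X') ->
    alphaAbs (qAbs xs x X) (qAbs xs x' X').

Inductive alphaAll : qterm -> qterm -> Prop :=
| alphaAll_Var : forall xs x, alphaAll (qVar xs x) (qVar xs x)
| alphaAll_Op : forall d inp inp' binp binp',
    (forall i, (inp i = None /\ inp' i = None) \/
               (exists Z Z', inp i = Some Z /\ inp' i = Some Z' /\ alphaAll Z Z')) ->
    (forall i, (binp i = None /\ binp' i = None) \/
               (exists A A', binp i = Some A /\ binp' i = Some A' /\ alphaAllAbs A A')) ->
    alphaAll (qOp d inp binp) (qOp d inp' binp')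
with alphaAllAbs : qabs -> qabs -> Prop :=
| alphaAllAbs_Abs : forall xs x X x' X',
    (forall y, y <> x -> y <> x' -> qFresh xs y X -> qFresh xs y X' ->
               alphaAll (qSwap xs y x X) (qSwap xs y x' X')) ->
    alphaAllAbs (qAbs xs x X) (qAbs xs x' X').

End Quasiterms.

(* Main.v *)
Require Import Defs.
From Stdlib Require Import Classical ClassicalEpsilon FunctionalExtensionality List.
Set Implicit Arguments.

Section S.
Variables var varsort index bindex opsym : Type.
Notation term := (qterm var varsort index bindex opsym).
Notation abs := (qabs var varsort index bindex opsym).
Notation QV := (@qVar var varsort index bindex opsym).
Notation AL := (@alpha var varsort index bindex opsym).
Notation ALA := (@alphaAbs var varsort index bindex opsym).
Notation ALL := (@alphaAll var varsort index bindex opsym).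
Notation ALLA := (@alphaAllAbs var varsort index bindex opsym).

Section Ind.
Variables (P : term -> Prop) (Q : abs -> Prop).
Hypothesis HV : forall xs x, P (QV xs x).
Hypothesis HO : forall d inp binp, (forall i Z, inp i = Some Z -> P Z) ->
  (forall i A, binp i = Some A -> Q A) -> P (qOp d inp binp).
Hypothesis HA : forall xs x X, P X -> Q (qAbs xs x X).

Fixpoint tind (X : term) : P X :=
  match X with
  | @qVar _ _ _ _ _ xs x => HV xs x
  | qOp d inp binp => HO d inp binp
      (fun i => match inp i as o return forall Z, o = Some Z -> P Z with
                | Some Z0 => fun Z e =>
                    match e in _ = o return (match o with Some Z => P Z | None => True end) with
                    | eq_refl => tind Z0 end
                | None => fun Z e => False_ind _
                    (match e in _ = o return (match o with Some _ => False | None => True end) with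
                     | eq_refl => I end)
                end)
      (fun i => match binp i as o return forall A, o = Some A -> Q A with
                | Some A0 => fun A e =>
                    match e in _ = o return (match o with Some A => Q A | None => True end) with
                    | eq_refl => aind A0 end
                | None => fun A e => False_ind _
                    (match e in _ = o return (match o with Some _ => False | None => True end) with
                     | eq_refl => I end)
                end)
  end
with aind (A : abs) : Q A :=
  match A with qAbs xs x X => HA xs x (tind X) end.

Lemma term_ind2 : (forall X, P X) /\ (forall A, Q A).
Proof. split; [exact tind | exact aind]. Qed.
End Ind.

Ltac dem := repeat match goal with
  | |- context [excluded_middle_informative ?P] => destruct (excluded_middle_informative P); subst; try congruence
  | H : context [excluded_middle_informative ?P] |- _ => destruct (excluded_middle_informative P); subst; try congruence
  end.

Lemma swS_invol : forall (xs zs : varsort) (y x z : var), swS xs zs y x (swS xs zs y x z) = z.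
Proof. intros; unfold swS, sw; dem. Qed.

Lemma swS_inj : forall (xs zs : varsort) (y x a b : var), swS xs zs y x a = swS xs zs y x b -> a = b.
Proof. intros. rewrite <- (swS_invol xs zs y x a), <- (swS_invol xs zs y x b). congruence. Qed.

Lemma swS_compose : forall (zs xs ws : varsort) (u v y x w : var),
  swS zs ws u v (swS xs ws y x w) = swS xs ws (swS zs xs u v y) (swS zs xs u v x) (swS zs ws u v w).
Proof. intros; unfold swS, sw; dem. Qed.

Lemma swS_other : forall (xs zs : varsort) (y x z : var), (zs = xs -> z <> y /\ z <> x) -> swS xs zs y x z = z.
Proof. intros; unfold swS, sw; dem; firstorder congruence. Qed.

Lemma swS_diff : forall (xs zs : varsort) (y x z : var), zs <> xs -> swS xs zs y x z = z.
Proof. intros; unfold swS, sw; dem. Qed.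

Lemma swS_same_l : forall (xs : varsort) (y x : var), swS xs xs y x y = x.
Proof. intros; unfold swS, sw; dem. Qed.
Lemma swS_same_r : forall (xs : varsort) (y x : var), swS xs xs y x x = y.
Proof. intros; unfold swS, sw; dem. Qed.


Lemma qSwap_compose_all : forall (zs xs : varsort) (u v y x : var),
  (forall X : term, qSwap zs u v (qSwap xs y x X) =
     qSwap xs (swS zs xs u v y) (swS zs xs u v x) (qSwap zs u v X)) /\
  (forall A : abs, qSwapAbs zs u v (qSwapAbs xs y x A) =
     qSwapAbs xs (swS zs xs u v y) (swS zs xs u v x) (qSwapAbs zs u v A)).
Proof.
  intros. apply term_ind2.
  - intros; simpl. f_equal. apply swS_compose.
  - intros d inp binp IH1 IH2. simpl. f_equal; apply functional_extensionality; intro i.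
    + destruct (inp i) eqn:E; [simpl; f_equal; eapply IH1; eauto | reflexivity].
    + destruct (binp i) eqn:E; [simpl; f_equal; eapply IH2; eauto | reflexivity].
  - intros; simpl. f_equal; auto. apply swS_compose.
Qed.

Lemma qSwap_compose : forall (zs xs : varsort) (u v y x : var) (X : term),
  qSwap zs u v (qSwap xs y x X) = qSwap xs (swS zs xs u v y) (swS zs xs u v x) (qSwap zs u v X).
Proof. intros; apply qSwap_compose_all. Qed.

Lemma qFresh_swap_all : forall (xs : varsort) (y x : var) (zs : varsort) (z : var),
  (forall X : term, qFresh zs (swS xs zs y x z) (qSwap xs y x X) <-> qFresh zs z X) /\
  (forall A : abs, qFreshAbs zs (swS xs zs y x z) (qSwapAbs xs y x A) <-> qFreshAbs zs z A).
Proof.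
  intros. apply term_ind2.
  - intros ys w; simpl. split; intros H [H1 H2]; apply H; subst; split; auto.
    + eapply swS_inj; eauto.
  - intros d inp binp IH1 IH2. simpl. split; intros [H1 H2]; split; intro i.
    + specialize (H1 i). destruct (inp i) eqn:E; auto. eapply IH1; eauto.
    + specialize (H2 i). destruct (binp i) eqn:E; auto. eapply IH2; eauto.
    + specialize (H1 i). destruct (inp i) eqn:E; auto. eapply IH1; eauto.
    + specialize (H2 i). destruct (binp i) eqn:E; auto. eapply IH2; eauto.
  - intros ys w X IH; simpl. rewrite IH. split; intros [[H1 H2]|H]; auto; left; subst; split; auto.
    eapply swS_inj; eauto.
Qed.

Lemma qFresh_swap : forall (xs zs : varsort) (y x z : var) (X : term),
  qFresh zs z (qSwap xs y x X) <-> qFresh zs (swS xs zs y x z) X.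
Proof.
  intros. rewrite <- (proj1 (qFresh_swap_all xs y x zs (swS xs zs y x z))).
  rewrite swS_invol. tauto.
Qed.


Definition swapL (l : list (varsort * var * var)) (X : term) : term :=
  fold_right (fun p X => qSwap (fst (fst p)) (snd (fst p)) (snd p) X) X l.
Definition swapLA (l : list (varsort * var * var)) (A : abs) : abs :=
  fold_right (fun p A => qSwapAbs (fst (fst p)) (snd (fst p)) (snd p) A) A l.
Definition swapLv (l : list (varsort * var * var)) (zs : varsort) (z : var) : var :=
  fold_right (fun p z => swS (fst (fst p)) zs (snd (fst p)) (snd p) z) z l.

Lemma swapL_var : forall l xs x, swapL l (QV xs x) = QV xs (swapLv l xs x).
Proof. induction l; simpl; intros; auto. rewrite IHl; reflexivity. Qed.

Lemma swapL_op : forall l d inp binp, swapL l (qOp d inp binp) =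
  qOp d (fun i => match inp i with Some Z => Some (swapL l Z) | None => None end)
        (fun i => match binp i with Some A => Some (swapLA l A) | None => None end).
Proof.
  induction l; simpl; intros.
  - f_equal; apply functional_extensionality; intro i; destruct (_ i); auto.
  - rewrite IHl; simpl. f_equal; apply functional_extensionality; intro i; destruct (_ i); auto.
Qed.

Lemma swapLA_abs : forall l xs x X, swapLA l (qAbs xs x X) = qAbs xs (swapLv l xs x) (swapL l X).
Proof. induction l; simpl; intros; auto. rewrite IHl; reflexivity. Qed.

Lemma swapL_app : forall l1 l2 X, swapL (l1 ++ l2) X = swapL l1 (swapL l2 X).
Proof. intros; unfold swapL; rewrite fold_right_app; reflexivity. Qed.

Section SInd.
Variables (P : term -> Prop) (Q : abs -> Prop).
Hypothesis HV : forall xs x, P (QV xs x).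
Hypothesis HO : forall d inp binp, (forall i Z, inp i = Some Z -> P Z) ->
  (forall i A, binp i = Some A -> Q A) -> P (qOp d inp binp).
Hypothesis HA : forall xs x X, (forall l, P (swapL l X)) -> Q (qAbs xs x X).

Lemma swap_ind : (forall X, P X) /\ (forall A, Q A).
Proof.
  assert (H : (forall X l, P (swapL l X)) /\ (forall A l, Q (swapLA l A))).
  { apply term_ind2.
    - intros; rewrite swapL_var; auto.
    - intros d inp binp IH1 IH2 l. rewrite swapL_op. apply HO.
      + intros i Z E. destruct (inp i) eqn:E'; [|discriminate]. injection E; intros; subst; eauto.
      + intros i Z E. destruct (binp i) eqn:E'; [|discriminate]. injection E; intros; subst; eauto.
    - intros xs x X IH l. rewrite swapLA_abs. apply HA. intro l'. rewrite <- swapL_app. auto. }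
  split; [intro X; exact (proj1 H X nil) | intro A; exact (proj2 H A nil)].
Qed.
End SInd.

Lemma sig_inj : forall (A : Type) (S : A -> Prop) (a b : {v | S v}), proj1_sig a = proj1_sig b -> a = b.
Proof. intros A S0 [a Ha] [b Hb]; simpl; intro; subst; f_equal; apply proof_irrelevance. Qed.

Lemma card_le_trans : forall A B C : Type, card_le A B -> card_le B C -> card_le A C.
Proof. intros A B C [f Hf] [g Hg]; exists (fun a => g (f a)); auto. Qed.

Lemma card_lt_of_le : forall A B : Type, card_le A B -> card_lt B var -> card_lt A var.
Proof.
  intros A B H [H1 H2]; split.
  - eapply card_le_trans; eauto.
  - intro H3; apply H2; eapply card_le_trans; eauto.
Qed.

Definition small (S : var -> Prop) := card_lt {v | S v} var.

Lemma small_sub : forall S T : var -> Prop, (forall v, S v -> T v) -> small T -> small S.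
Proof.
  intros S0 T H HT; unfold small; eapply card_lt_of_le; [|exact HT].
  exists (fun a => exist _ (proj1_sig a) (H _ (proj2_sig a))).
  intros a b E; apply sig_inj; apply (f_equal (@proj1_sig _ _)) in E; exact E.
Qed.

Hypothesis Hinf : infinite_type var.
Hypothesis Hreg : regular_type var.

Lemma small_single : forall a : var, small (fun v => v = a).
Proof.
  intro a; split.
  - exists (@proj1_sig _ _); apply sig_inj.
  - intros [f Hf]. destruct Hinf as [g Hg].
    assert (g 0 = g 1) as E.
    { apply Hf. apply sig_inj. destruct (f (g 0)), (f (g 1)); simpl; congruence. }
    apply Hg in E; discriminate.
Qed.

Lemma small_false : small (fun _ => False).
Proof. destruct Hinf as [g _]. apply small_sub with (T := fun v => v = g 0); tauto || (intros; contradiction) || apply small_single. Qed.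

Lemma bool_small : card_lt bool var.
Proof.
  destruct Hinf as [g Hg]; split.
  - exists (fun b : bool => if b then g 0 else g 1). intros [|] [|] E; auto; apply Hg in E; discriminate.
  - intros [f Hf].
    assert (forall n m, f (g n) = f (g m) -> n = m) as K by (intros; apply Hg, Hf; auto).
    destruct (f (g 0)) eqn:E0, (f (g 1)) eqn:E1, (f (g 2)) eqn:E2;
      first [ assert (0 = 1) by (apply K; congruence); discriminate
            | assert (0 = 2) by (apply K; congruence); discriminate
            | assert (1 = 2) by (apply K; congruence); discriminate ].
Qed.

Lemma small_union : forall S T : var -> Prop, small S -> small T -> small (fun v => S v \/ T v).
Proof.
  intros S0 T HS HT.
  apply small_sub with (T := fun v => exists b : bool, (if b then S0 else T) v).
  - intros v [H|H]; [exists true | exists false]; auto.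
  - apply Hreg. apply bool_small. intros [|]; auto.
Qed.

Lemma small_pick : forall S : var -> Prop, small S -> exists y, ~ S y.
Proof.
  intros S0 [_ H]. apply NNPP; intro H'. apply H.
  assert (forall y, S0 y) as K by (intro y; apply NNPP; intro; apply H'; eauto).
  exists (fun y => exist _ y (K y)). intros a b E; apply (f_equal (@proj1_sig _ _)) in E; exact E.
Qed.

Fixpoint occ (v : var) (X : term) {struct X} : Prop :=
  match X with
  | @qVar _ _ _ _ _ _ x => x = v
  | qOp _ inp binp =>
      (exists i, match inp i with Some Z => occ v Z | None => False end) \/
      (exists i, match binp i with Some A => occA v A | None => False end)
  end
with occA (v : var) (A : abs) {struct A} : Prop :=
  match A with qAbs _ x X => x = v \/ occ v X end.

Lemma occ_fresh_all : forall (xs : varsort) (v : var),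
  (forall X, ~ occ v X -> qFresh xs v X) /\ (forall A, ~ occA v A -> qFreshAbs xs v A).
Proof.
  intros; apply term_ind2.
  - simpl; intros ys y H [_ E]; auto.
  - simpl; intros d inp binp IH1 IH2 H; split; intro i.
    + destruct (inp i) eqn:E; auto. eapply IH1; eauto. intro K; apply H; left; exists i; rewrite E; auto.
    + destruct (binp i) eqn:E; auto. eapply IH2; eauto. intro K; apply H; right; exists i; rewrite E; auto.
  - simpl; intros ys y X IH H; right; auto.
Qed.

Lemma occ_fresh : forall (xs : varsort) (v : var) X, ~ occ v X -> qFresh xs v X.
Proof. intros; apply occ_fresh_all; auto. Qed.

Lemma occ_small_all : (forall X, qGood X -> small (fun v => occ v X)) /\
  (forall A, qGoodAbs A -> small (fun v => occA v A)).
Proof.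
  apply term_ind2.
  - intros xs x _; apply small_sub with (T := fun v => v = x); [simpl; intros; congruence | apply small_single].
  - intros d inp binp IH1 IH2 [G1 [G2 [D1 D2]]].
    eapply small_sub; [| apply small_union;
       [apply (Hreg (I := dom inp) (fun i v => match inp (proj1_sig i) with Some Z => occ v Z | None => False end) D1)
       |apply (Hreg (I := dom binp) (fun i v => match binp (proj1_sig i) with Some A => occA v A | None => False end) D2)]].
    + simpl; intros v [[i Hi]|[i Hi]]; [left|right].
      * assert (inp i <> None) as N by (destruct (inp i); [discriminate | contradiction]).
        exists (exist _ i N); exact Hi.
      * assert (binp i <> None) as N by (destruct (binp i); [discriminate | contradiction]).
        exists (exist _ i N); exact Hi.
    + intros [i N]; simpl. specialize (G1 i). destruct (inp i) eqn:E.
      * eapply IH1; eauto.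
      * apply small_false.
    + intros [i N]; simpl. specialize (G2 i). destruct (binp i) eqn:E.
      * eapply IH2; eauto.
      * apply small_false.
  - simpl; intros xs x X IH G. apply small_union; auto. apply small_sub with (T := fun v => v = x); auto.
    apply small_single.
Qed.

Lemma occ_small : forall X, qGood X -> small (fun v => occ v X).
Proof. apply occ_small_all. Qed.

Lemma good_swap_all : forall (xs : varsort) (y x : var),
  (forall X : term, qGood X -> qGood (qSwap xs y x X)) /\ (forall A : abs, qGoodAbs A -> qGoodAbs (qSwapAbs xs y x A)).
Proof.
  intros; apply term_ind2.
  - simpl; auto.
  - simpl; intros d inp binp IH1 IH2 [G1 [G2 [D1 D2]]]; split; [|split; [|split]].
    + intro i; specialize (G1 i); destruct (inp i) eqn:E; eauto.
    + intro i; specialize (G2 i); destruct (binp i) eqn:E; eauto.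
    + eapply card_lt_of_le; [|exact D1].
      unshelve eexists.
      * intros [i N]; exists i; destruct (inp i); [discriminate | exact N].
      * intros [a Ha] [b Hb] E. apply sig_inj; simpl in *. apply (f_equal (@proj1_sig _ _)) in E. exact E.
    + eapply card_lt_of_le; [|exact D2].
      unshelve eexists.
      * intros [i N]; exists i; destruct (binp i); [discriminate | exact N].
      * intros [a Ha] [b Hb] E. apply sig_inj; simpl in *. apply (f_equal (@proj1_sig _ _)) in E. exact E.
  - simpl; auto.
Qed.

Lemma good_swap : forall xs y x (X : term), qGood X -> qGood (qSwap xs y x X).
Proof. intros; apply good_swap_all; auto. Qed.


Definition lift {I T : Type} (R : T -> T -> Prop) (f g : I -> option T) :=
  forall i, (f i = None /\ g i = None) \/ (exists Z Z', f i = Some Z /\ g i = Some Z' /\ R Z Z').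

Lemma lift_refl : forall (I T : Type) (R : T -> T -> Prop) (f : I -> option T),
  (forall i Z, f i = Some Z -> R Z Z) -> lift R f f.
Proof. intros I T R f H i; destruct (f i) eqn:E; [right; exists t, t; eauto | left; auto]. Qed.

Lemma lift_sym : forall (I T : Type) (R R' : T -> T -> Prop) (f g : I -> option T),
  lift R f g -> (forall i Z Z', f i = Some Z -> g i = Some Z' -> R Z Z' -> R' Z' Z) -> lift R' g f.
Proof.
  intros I T R R' f g H K i; destruct (H i) as [[E1 E2]|[Z [Z' [E1 [E2 E3]]]]]; [left; auto | right; eauto 10].
Qed.

Lemma lift_trans : forall (I T : Type) (R : T -> T -> Prop) (f g h : I -> option T),
  lift R f g -> lift R g h ->
  (forall i Z Z' Z'', f i = Some Z -> g i = Some Z' -> h i = Some Z'' -> R Z Z' -> R Z' Z'' -> R Z Z'') ->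
  lift R f h.
Proof.
  intros I T R f g h H1 H2 K i; destruct (H1 i) as [[E1 E2]|[Z [Z' [E1 [E2 E3]]]]];
   destruct (H2 i) as [[F1 F2]|[W [W' [F1 [F2 F3]]]]]; try congruence.
  - left; auto.
  - right. rewrite E2 in F1; injection F1; intros; subst. exists Z, W'; eauto 10.
Qed.

Lemma lift_map : forall (I T : Type) (R R' : T -> T -> Prop) (s : T -> T) (f g : I -> option T),
  lift R f g -> (forall i Z Z', f i = Some Z -> g i = Some Z' -> R Z Z' -> R' (s Z) (s Z')) ->
  lift R' (fun i => match f i with Some Z => Some (s Z) | None => None end)
          (fun i => match g i with Some Z => Some (s Z) | None => None end).
Proof.
  intros I T R R' s f g H K i; destruct (H i) as [[E1 E2]|[Z [Z' [E1 [E2 E3]]]]]; rewrite E1, E2;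
  [left; auto | right; eauto 10].
Qed.

Lemma lift_mono : forall (I T : Type) (R R' : T -> T -> Prop) (f g : I -> option T),
  lift R f g -> (forall i Z Z', f i = Some Z -> g i = Some Z' -> R Z Z' -> R' Z Z') -> lift R' f g.
Proof.
  intros I T R R' f g H K i; destruct (H i) as [[E1 E2]|[Z [Z' [E1 [E2 E3]]]]]; [left; auto | right; eauto 10].
Qed.

Lemma alpha_var_inv : forall xs x (Y : term), alpha (QV xs x) Y -> Y = QV xs x.
Proof. intros; inversion H; subst; auto. Qed.

Lemma alpha_op_inv : forall d inp binp (Y : term), alpha (qOp d inp binp) Y ->
  exists inp' binp', Y = qOp d inp' binp' /\ lift AL inp inp' /\ lift ALA binp binp'.
Proof. intros; inversion H; subst; eauto 10. Qed.

Lemma alphaAbs_inv : forall xs x (X : term) B, alphaAbs (qAbs xs x X) B ->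
  exists x' X' y, B = qAbs xs x' X' /\ y <> x /\ y <> x' /\ qFresh xs y X /\ qFresh xs y X' /\
    alpha (qSwap xs y x X) (qSwap xs y x' X').
Proof. intros; inversion H; subst; eauto 20. Qed.

Lemma alphaAll_var_inv : forall xs x (Y : term), alphaAll (QV xs x) Y -> Y = QV xs x.
Proof. intros; inversion H; subst; auto. Qed.

Lemma alphaAll_op_inv : forall d inp binp (Y : term), alphaAll (qOp d inp binp) Y ->
  exists inp' binp', Y = qOp d inp' binp' /\ lift ALL inp inp' /\ lift ALLA binp binp'.
Proof. intros; inversion H; subst; eauto 10. Qed.

Lemma alphaAllAbs_inv : forall xs x (X : term) B, alphaAllAbs (qAbs xs x X) B ->
  exists x' X', B = qAbs xs x' X' /\ (forall y, y <> x -> y <> x' -> qFresh xs y X -> qFresh xs y X' ->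
    alphaAll (qSwap xs y x X) (qSwap xs y x' X')).
Proof. intros; inversion H; subst; eauto 20. Qed.


Lemma alpha_swap_all :
  (forall X : term, forall Y zs u v, alpha X Y -> alpha (qSwap zs u v X) (qSwap zs u v Y)) /\
  (forall A : abs, forall B zs u v, alphaAbs A B -> alphaAbs (qSwapAbs zs u v A) (qSwapAbs zs u v B)).
Proof.
  apply swap_ind.
  - intros xs x Y zs u v H; apply alpha_var_inv in H; subst; simpl; constructor.
  - intros d inp binp IH1 IH2 Y zs u v H.
    destruct (alpha_op_inv H) as [inp' [binp' [E [H1 H2]]]]; subst; simpl; constructor.
    + eapply lift_map; [exact H1|]; eauto.
    + eapply lift_map; [exact H2|]; eauto.
  - intros xs x X IH B zs u v H.
    destruct (alphaAbs_inv H) as [x' [X' [y [E [N1 [N2 [F1 [F2 Ha]]]]]]]]; subst; simpl.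
    apply alphaAbs_Abs with (y := swS zs xs u v y).
    + intro K; apply swS_inj in K; auto.
    + intro K; apply swS_inj in K; auto.
    + rewrite qFresh_swap, swS_invol; auto.
    + rewrite qFresh_swap, swS_invol; auto.
    + rewrite <- !qSwap_compose. exact (IH ((xs, y, x) :: nil) _ _ _ _ Ha).
Qed.

Lemma alpha_swap : forall (X Y : term) zs u v, alpha X Y -> alpha (qSwap zs u v X) (qSwap zs u v Y).
Proof. intros; apply alpha_swap_all; auto. Qed.

Lemma alpha_sym_all :
  (forall X : term, forall Y, alpha X Y -> alpha Y X) /\
  (forall A : abs, forall B, alphaAbs A B -> alphaAbs B A).
Proof.
  apply swap_ind.
  - intros xs x Y H; apply alpha_var_inv in H; subst; constructor.
  - intros d inp binp IH1 IH2 Y H.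
    destruct (alpha_op_inv H) as [inp' [binp' [E [H1 H2]]]]; subst; constructor.
    + eapply lift_sym; [exact H1|]; eauto.
    + eapply lift_sym; [exact H2|]; eauto.
  - intros xs x X IH B H.
    destruct (alphaAbs_inv H) as [x' [X' [y [E [N1 [N2 [F1 [F2 Ha]]]]]]]]; subst.
    apply alphaAbs_Abs with (y := y); auto.
    exact (IH ((xs, y, x) :: nil) _ Ha).
Qed.

Lemma alpha_sym : forall X Y : term, alpha X Y -> alpha Y X.
Proof. apply alpha_sym_all. Qed.

Lemma alpha_fresh_all :
  (forall X : term, forall Y zs z, alpha X Y -> qFresh zs z X -> qFresh zs z Y) /\
  (forall A : abs, forall B zs z, alphaAbs A B -> qFreshAbs zs z A -> qFreshAbs zs z B).
Proof.
  apply swap_ind.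
  - intros xs x Y zs z H; apply alpha_var_inv in H; subst; auto.
  - intros d inp binp IH1 IH2 Y zs z H [F1 F2].
    destruct (alpha_op_inv H) as [inp' [binp' [E [H1 H2]]]]; subst; split; intro i.
    + specialize (F1 i); destruct (H1 i) as [[E1 E2]|[Z [Z' [E1 [E2 E3]]]]]; rewrite E2; auto.
      rewrite E1 in F1; eauto.
    + specialize (F2 i); destruct (H2 i) as [[E1 E2]|[Z [Z' [E1 [E2 E3]]]]]; rewrite E2; auto.
      rewrite E1 in F2; eauto.
  - intros xs x X IH B zs z H F.
    destruct (alphaAbs_inv H) as [x' [X' [y [E [N1 [N2 [F1 [F2 Ha]]]]]]]]; subst; simpl in *.
    destruct (classic (xs = zs /\ x' = z)) as [K|K]; [left; auto | right].
    assert (IH' : forall zs z, qFresh zs z (qSwap xs y x X) -> qFresh zs z (qSwap xs y x' X'))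
      by (intros; exact (IH ((xs, y, x) :: nil) _ _ _ Ha H0)).
    destruct (classic (xs = zs)) as [Es|Es].
    + subst zs. destruct (classic (z = y)) as [Ey|Ey]; [subst; auto|].
      assert (z <> x') by (intro; apply K; auto).
      assert (qFresh xs z (qSwap xs y x' X')) as G.
      { apply IH'. rewrite qFresh_swap. destruct (classic (z = x)) as [Ex|Ex].
        - subst; rewrite swS_same_r; auto.
        - rewrite swS_other; [|intros; auto]. destruct F as [[_ F]|F]; [congruence|auto]. }
      rewrite qFresh_swap, swS_other in G; auto.
    + assert (qFresh zs z (qSwap xs y x' X')) as G.
      { apply IH'. rewrite qFresh_swap, swS_diff; auto. destruct F as [[F _]|F]; [congruence|auto]. }
      rewrite qFresh_swap, swS_diff in G; auto.
Qed.


Ltac splitnot := repeat match goal with H : ~ (_ \/ _) |- _ => apply not_or_and in H; destruct H end.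
Ltac prove_small := repeat (apply small_union); first [apply occ_small; assumption | apply small_single].

Lemma alpha_refl_all :
  (forall X : term, qGood X -> alpha X X) /\ (forall A : abs, qGoodAbs A -> alphaAbs A A).
Proof.
  apply swap_ind.
  - intros; constructor.
  - intros d inp binp IH1 IH2 [G1 [G2 _]]; constructor; apply lift_refl; intros i Z E.
    + specialize (G1 i); rewrite E in G1; eauto.
    + specialize (G2 i); rewrite E in G2; eauto.
  - intros xs x X IH G; simpl in G.
    destruct (small_pick (S := fun v => occ v X \/ v = x)) as [y Hy]; [prove_small|]; splitnot.
    apply alphaAbs_Abs with (y := y); auto using occ_fresh.
    apply (IH ((xs, y, x) :: nil)). apply good_swap; auto.
Qed.

Lemma alpha_refl : forall X : term, qGood X -> alpha X X.
Proof. apply alpha_refl_all. Qed.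

Lemma fresh_helper : forall xs zs x y z (X : term), qFreshAbs zs z (qAbs xs x X) ->
  (xs = zs -> y <> z) -> qFresh xs y X -> qFresh zs z (qSwap xs y x X).
Proof.
  intros xs zs x y z X H N F; simpl in H; rewrite qFresh_swap.
  destruct (classic (xs = zs)) as [E|E].
  - subst zs. destruct H as [[_ E]|H]; [subst; rewrite swS_same_r; auto|].
    destruct (classic (z = x)) as [Ex|Ex]; [subst; rewrite swS_same_r; auto|].
    rewrite swS_other; auto. intros _; split; auto. intro; apply N; auto.
  - rewrite swS_diff; auto. destruct H as [[E' _]|H]; [congruence|auto].
Qed.

Lemma lemmaA_all :
  (forall X : term, qGood X -> forall zs z1 z2, qFresh zs z1 X -> qFresh zs z2 X ->
     alpha (qSwap zs z1 z2 X) X) /\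
  (forall A : abs, qGoodAbs A -> forall zs z1 z2, qFreshAbs zs z1 A -> qFreshAbs zs z2 A ->
     alphaAbs (qSwapAbs zs z1 z2 A) A).
Proof.
  apply swap_ind.
  - intros ys w _ zs z1 z2 F1 F2; simpl in *. rewrite swS_other; [constructor|].
    intro E; subst; split; intro; subst; auto.
  - intros d inp binp IH1 IH2 [G1 [G2 _]] zs z1 z2 [F1 F2] [F1' F2']; simpl; constructor; intro i.
    + specialize (G1 i); specialize (F1 i); specialize (F1' i).
      destruct (inp i) eqn:E; [right; eexists; eexists; split; [reflexivity|split; [reflexivity|]]; eauto | left; auto].
    + specialize (G2 i); specialize (F2 i); specialize (F2' i).
      destruct (binp i) eqn:E; [right; eexists; eexists; split; [reflexivity|split; [reflexivity|]]; eauto | left; auto].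
  - intros xs x X IH G zs z1 z2 F1 F2; simpl in G.
    destruct (small_pick (S := fun v => occ v X \/ v = x \/ v = z1 \/ v = z2 \/ v = swS zs xs z1 z2 x))
      as [y Hy]; [prove_small|]; splitnot.
    simpl. apply alphaAbs_Abs with (y := y); auto using occ_fresh.
    + rewrite qFresh_swap, swS_other; auto using occ_fresh.
    + assert (E : qSwap xs y (swS zs xs z1 z2 x) (qSwap zs z1 z2 X) = qSwap zs z1 z2 (qSwap xs y x X))
        by (rewrite (qSwap_compose zs xs z1 z2 y x X), (swS_other (xs:=zs) (zs:=xs) (y:=z1) (x:=z2) (z:=y)); auto).
      rewrite E. apply (IH ((xs, y, x) :: nil)).
      * apply good_swap; auto.
      * apply fresh_helper; auto using occ_fresh.
      * apply fresh_helper; auto using occ_fresh.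
Qed.

Lemma lemmaA : forall (X : term) zs z1 z2, qGood X -> qFresh zs z1 X -> qFresh zs z2 X ->
  alpha (qSwap zs z1 z2 X) X.
Proof. intros; apply lemmaA_all; auto. Qed.


Lemma lemmaB_gen : forall (A : term) xs x (X : term) x' (X' : term) y1 y,
  qGood X -> qGood X' ->
  (forall Y Z, qGood Y -> qGood Z -> alpha A Y -> alpha Y Z -> alpha A Z) ->
  y1 <> x -> y1 <> x' -> qFresh xs y1 X -> qFresh xs y1 X' ->
  alpha (qSwap xs y1 x X) (qSwap xs y1 x' X') ->
  y <> x -> y <> x' -> qFresh xs y X -> qFresh xs y X' ->
  alpha A (qSwap xs y x X) -> alpha A (qSwap xs y x' X').
Proof.
  intros A xs x X x' X' y1 y G G' T N1 N2 F1 F2 Ha M1 M2 E1 E2 HA.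
  assert (h1 : alpha (qSwap xs y x X) (qSwap xs y x (qSwap xs y y1 X))).
  { apply alpha_sym, alpha_swap, lemmaA; auto. }
  assert (h2 : alpha (qSwap xs y x (qSwap xs y y1 X)) (qSwap xs y x' (qSwap xs y y1 X'))).
  { pose proof (alpha_swap xs y y1 Ha) as K.
    rewrite (qSwap_compose xs xs y y1 y1 x X), (qSwap_compose xs xs y y1 y1 x' X'), swS_same_r in K.
    rewrite (swS_other (xs:=xs) (zs:=xs) (y:=y) (x:=y1) (z:=x)) in K; [|intros; split; auto].
    rewrite (swS_other (xs:=xs) (zs:=xs) (y:=y) (x:=y1) (z:=x')) in K; [exact K|intros; split; auto]. }
  assert (h3 : alpha (qSwap xs y x' (qSwap xs y y1 X')) (qSwap xs y x' X')).
  { apply alpha_swap, lemmaA; auto. }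
  apply T with (Y := qSwap xs y x' (qSwap xs y y1 X')); auto using good_swap.
  apply T with (Y := qSwap xs y x (qSwap xs y y1 X)); auto using good_swap.
  apply T with (Y := qSwap xs y x X); auto using good_swap.
Qed.


Lemma alpha_trans_all :
  (forall X : term, qGood X -> forall Y Z, qGood Y -> qGood Z -> alpha X Y -> alpha Y Z -> alpha X Z) /\
  (forall A : abs, qGoodAbs A -> forall B C, qGoodAbs B -> qGoodAbs C ->
     alphaAbs A B -> alphaAbs B C -> alphaAbs A C).
Proof.
  apply swap_ind.
  - intros xs x _ Y Z _ _ H1 H2; apply alpha_var_inv in H1; subst; auto.
  - intros d inp binp IH1 IH2 [G1 [G2 _]] Y Z GY GZ H H'.
    destruct (alpha_op_inv H) as [inp' [binp' [E [H1 H2]]]]; subst.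
    destruct (alpha_op_inv H') as [inp'' [binp'' [E [H1' H2']]]]; subst.
    destruct GY as [GY1 [GY2 _]]; destruct GZ as [GZ1 [GZ2 _]].
    constructor.
    + eapply lift_trans; [exact H1 | exact H1' |]. intros i A B C EA EB EC; eapply IH1; eauto.
      * specialize (G1 i); rewrite EA in G1; auto.
      * specialize (GY1 i); rewrite EB in GY1; auto.
      * specialize (GZ1 i); rewrite EC in GZ1; auto.
    + eapply lift_trans; [exact H2 | exact H2' |]. intros i A B C EA EB EC; eapply IH2; eauto.
      * specialize (G2 i); rewrite EA in G2; auto.
      * specialize (GY2 i); rewrite EB in GY2; auto.
      * specialize (GZ2 i); rewrite EC in GZ2; auto.
  - intros xs x X IH G B C GB GC H H'; simpl in G.
    destruct (alphaAbs_inv H) as [x' [X' [y1 [E [N1 [N2 [F1 [F2 Ha]]]]]]]]; subst.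
    destruct (alphaAbs_inv H') as [x'' [X'' [y2 [E [N1' [N2' [F1' [F2' Ha']]]]]]]]; subst.
    simpl in GB, GC.
    destruct (small_pick (S := fun v => occ v X \/ occ v X' \/ occ v X'' \/ v = x \/ v = x' \/ v = x''))
      as [y Hy]; [prove_small|]; splitnot.
    apply alphaAbs_Abs with (y := y); auto using occ_fresh.
    assert (T : forall Y Z, qGood Y -> qGood Z -> alpha (qSwap xs y x X) Y -> alpha Y Z ->
                  alpha (qSwap xs y x X) Z).
    { intros Y0 Z0 GY0 GZ0 K1 K2; apply (IH ((xs, y, x) :: nil)) with (Y := Y0); simpl; auto using good_swap. }
    assert (R : alpha (qSwap xs y x X) (qSwap xs y x X)) by (apply alpha_refl, good_swap; auto).
    assert (R' : alpha (qSwap xs y x X) (qSwap xs y x' X')).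
    { eapply lemmaB_gen with (x := x) (X := X) (x' := x') (X' := X') (y1 := y1) (y := y); eauto using occ_fresh. }
    eapply lemmaB_gen with (x := x') (X := X') (x' := x'') (X' := X'') (y1 := y2) (y := y); eauto using occ_fresh.
Qed.

Lemma alpha_trans : forall X Y Z : term, qGood X -> qGood Y -> qGood Z -> alpha X Y -> alpha Y Z -> alpha X Z.
Proof. intros X Y Z GX GY GZ H1 H2; exact (proj1 alpha_trans_all X GX Y Z GY GZ H1 H2). Qed.

Lemma lemmaB : forall xs x (X : term) x' (X' : term) y1 y,
  qGood X -> qGood X' ->
  y1 <> x -> y1 <> x' -> qFresh xs y1 X -> qFresh xs y1 X' ->
  alpha (qSwap xs y1 x X) (qSwap xs y1 x' X') ->
  y <> x -> y <> x' -> qFresh xs y X -> qFresh xs y X' ->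
  alpha (qSwap xs y x X) (qSwap xs y x' X').
Proof.
  intros xs x X x' X' y1 y. intros.
  apply lemmaB_gen with (x := x) (X := X) (x' := x') (X' := X') (y1 := y1) (y := y); auto.
  - intros Y0 Z0 GY GZ K1 K2; apply alpha_trans with (Y := Y0); auto using good_swap.
  - apply alpha_refl, good_swap; auto.
Qed.

Lemma alpha_all_all :
  (forall X : term, qGood X -> forall Y, qGood Y -> alpha X Y -> alphaAll X Y) /\
  (forall A : abs, qGoodAbs A -> forall B, qGoodAbs B -> alphaAbs A B -> alphaAllAbs A B).
Proof.
  apply swap_ind.
  - intros xs x _ Y _ H1; apply alpha_var_inv in H1; subst; constructor.
  - intros d inp binp IH1 IH2 [G1 [G2 _]] Y GY H.
    destruct (alpha_op_inv H) as [inp' [binp' [E [H1 H2]]]]; subst.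
    destruct GY as [GY1 [GY2 _]].
    constructor.
    + eapply lift_mono; [exact H1|]. intros i A B EA EB HH; eapply IH1; eauto.
      * specialize (G1 i); rewrite EA in G1; auto.
      * specialize (GY1 i); rewrite EB in GY1; auto.
    + eapply lift_mono; [exact H2|]. intros i A B EA EB HH; eapply IH2; eauto.
      * specialize (G2 i); rewrite EA in G2; auto.
      * specialize (GY2 i); rewrite EB in GY2; auto.
  - intros xs x X IH G B GB H; simpl in G.
    destruct (alphaAbs_inv H) as [x' [X' [y1 [E [N1 [N2 [F1 [F2 Ha]]]]]]]]; subst. simpl in GB.
    constructor. intros y M1 M2 E1 E2.
    apply (IH ((xs, y, x) :: nil)); simpl; auto using good_swap.
    eapply lemmaB with (y1 := y1); eauto.
Qed.

Lemma all_alpha_all :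
  (forall X : term, qGood X -> forall Y, qGood Y -> alphaAll X Y -> alpha X Y) /\
  (forall A : abs, qGoodAbs A -> forall B, qGoodAbs B -> alphaAllAbs A B -> alphaAbs A B).
Proof.
  apply swap_ind.
  - intros xs x _ Y _ H1; apply alphaAll_var_inv in H1; subst; constructor.
  - intros d inp binp IH1 IH2 [G1 [G2 _]] Y GY H.
    destruct (alphaAll_op_inv H) as [inp' [binp' [E [H1 H2]]]]; subst.
    destruct GY as [GY1 [GY2 _]].
    constructor.
    + eapply lift_mono; [exact H1|]. intros i A B EA EB HH; eapply IH1; eauto.
      * specialize (G1 i); rewrite EA in G1; auto.
      * specialize (GY1 i); rewrite EB in GY1; auto.
    + eapply lift_mono; [exact H2|]. intros i A B EA EB HH; eapply IH2; eauto.
      * specialize (G2 i); rewrite EA in G2; auto.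
      * specialize (GY2 i); rewrite EB in GY2; auto.
  - intros xs x X IH G B GB H; simpl in G.
    destruct (alphaAllAbs_inv H) as [x' [X' [E Ha]]]; subst. simpl in GB.
    destruct (small_pick (S := fun v => occ v X \/ occ v X' \/ v = x \/ v = x'))
      as [y Hy]; [prove_small|]; splitnot.
    apply alphaAbs_Abs with (y := y); auto using occ_fresh.
    apply (IH ((xs, y, x) :: nil)); simpl; auto using good_swap, occ_fresh.
Qed.

End S.

Theorem proposition2 (var varsort index bindex opsym : Type)
  (Hinf : infinite_type var) (Hreg : regular_type var) :
  (* (1) alpha is an equivalence on good quasiterms *)
  ((forall X : qterm var varsort index bindex opsym, qGood X -> alpha X X) /\
   (forall X Y : qterm var varsort index bindex opsym,
      qGood X -> qGood Y -> alpha X Y -> alpha Y X) /\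
   (forall X Y Z : qterm var varsort index bindex opsym,
      qGood X -> qGood Y -> qGood Z -> alpha X Y -> alpha Y Z -> alpha X Z)) /\
  (* (1) alphaAbs is an equivalence on good quasiabstractions *)
  ((forall A : qabs var varsort index bindex opsym, qGoodAbs A -> alphaAbs A A) /\
   (forall A B : qabs var varsort index bindex opsym,
      qGoodAbs A -> qGoodAbs B -> alphaAbs A B -> alphaAbs B A) /\
   (forall A B C : qabs var varsort index bindex opsym,
      qGoodAbs A -> qGoodAbs B -> qGoodAbs C ->
      alphaAbs A B -> alphaAbs B C -> alphaAbs A C)) /\
  (* (2) the universal-clause variants coincide with alpha / alphaAbs on good inputs *)
  (forall X Y : qterm var varsort index bindex opsym,
      qGood X -> qGood Y -> (alphaAll X Y <-> alpha X Y)) /\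
  (forall A B : qabs var varsort index bindex opsym,
      qGoodAbs A -> qGoodAbs B -> (alphaAllAbs A B <-> alphaAbs A B)).
Proof.
  pose proof (@alpha_refl_all var varsort index bindex opsym Hinf Hreg) as [R1 R2].
  pose proof (alpha_sym_all var varsort index bindex opsym) as [S1 S2].
  pose proof (@alpha_trans_all var varsort index bindex opsym Hinf Hreg) as [T1 T2].
  pose proof (@alpha_all_all var varsort index bindex opsym Hinf Hreg) as [A1 A2].
  pose proof (@all_alpha_all var varsort index bindex opsym Hinf Hreg) as [B1 B2].
  split; [|split; [|split]].
  - split; [|split]; eauto.
  - split; [|split]; eauto.
  - intros; split; eauto.
  - intros; split; eauto.
Qed.
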